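(* Let $t_1, t_2 \in \mathsf{Topo}$ and let $f$ be an embedding of $t_1$ inside $t_2$. For every $q \in \mathsf{PIFOTree}(t_1)$, if $\mathsf{pop}(q) = (pkt, q')$, then $\mathsf{pop}(\widehat f(q)) = (pkt, \widehat f(q'))$.
   Context: Fix a set $\mathsf{Pkt}$ of packets and a totally ordered set $\mathsf{Rk}$ of ranks (smaller is more favorable). PIFOs: for a set $S$, a PIFO over $S$ is a finite sequence of pairs $(s,r)\in S\times\mathsf{Rk}$ in insertion order; $\mathsf{PIFO}(S)$ is the set of these. $\mathsf{pop}_{\mathsf{PIFO}}(p)$ is undefined if $p$ is empty; otherwise it removes the entry of minimal rank (earliest-inserted among ties) and returns $(s,p')$, its element and the rest. Topologies: $\mathsf{Topo}$ is the smallest set with $*\in\mathsf{Topo}$ and $\mathsf{Node}(\vec t)\in\mathsf{Topo}$ for $n\in\mathbb{N}$, $\vec t\in\mathsf{Topo}^n$. PIFO trees: $\mathsf{Leaf}(p)\in\mathsf{PIFOTree}( * )$ for $p\in\mathsf{PIFO}(\mathsf{Pkt})$; $\mathsf{Internal}(\vec q,p)\in\mathsf{PIFOTree}(\mathsf{Node}(\vec t))$ whenever $\vec t\in\mathsf{Topo}^n$, $p\in\mathsf{PIFO}(\{1,\dots,n\})$, $\vec q[i]\in\mathsf{PIFOTree}(\vec t[i])$. $\vec q[q'/i]$ replaces the $i$-th entry by $q'$. pop (partial): $\mathsf{pop}(\mathsf{Leaf}(p))=(pkt,\mathsf{Leaf}(p'))$ if $\mathsf{pop}_{\mathsf{PIFO}}(p)=(pkt,p')$;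 $\mathsf{pop}(\mathsf{Internal}(\vec q,p))=(pkt,\mathsf{Internal}(\vec q[q'/i],p'))$ if $\mathsf{pop}_{\mathsf{PIFO}}(p)=(i,p')$ and $\mathsf{pop}(\vec q[i])=(pkt,q')$; undefined otherwise. Addresses: $\mathsf{Addr}(t)\subseteq\mathbb{N}^*$ is the smallest set with $\epsilon\in\mathsf{Addr}(t)$ and $i\cdot\alpha\in\mathsf{Addr}(\mathsf{Node}(\vec t))$ for $1\le i\le n$, $\alpha\in\mathsf{Addr}(\vec t[i])$. Subtrees: $t/\epsilon=t$, $\mathsf{Node}(\vec t)/(i\cdot\alpha)=\vec t[i]/\alpha$. An embedding of $t_1$ in $t_2$ is an injective $f:\mathsf{Addr}(t_1)\to\mathsf{Addr}(t_2)$ with $f(\epsilon)=\epsilon$, $t_2/f(\alpha)=*$ whenever $t_1/\alpha=*$, and $\alpha$ a prefix of $\alpha'$ iff $f(\alpha)$ a prefix of $f(\alpha')$. If $t_1=*$ then $t_2=*$; if $t_1=\mathsf{Node}(\vec t_1)$, the map $f_i$ defined by $f(i\cdot\alpha)=f(i)\cdot f_i(\alpha)$ is an embedding of $t_1/i$ in $t_2/f(i)$. Lifting $\widehat f:\mathsf{PIFOTree}(t_1)\to\mathsf{PIFOTree}(t_2)$, by recursion on $t_1$: if $t_1=*$, $\widehat f(q)=q$. If $t_1=\mathsf{Node}(\vec t_1)$ with $n$ children and $q=\mathsf{Internal}(\vec q,p)$, define for each address $\alpha$ of $t_2$ that is a prefix of some $f(i)$ a tree $\widehat f(q)_\alpha\in\mathsf{PIFOTree}(t_2/\alpha)$,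 from longer to shorter $\alpha$: if $\alpha=f(i)$, $\widehat f(q)_\alpha=\widehat{f_i}(\vec q[i])$; otherwise $t_2/\alpha$ has some $m$ children and $\widehat f(q)_\alpha=\mathsf{Internal}(\vec q_\alpha,p_\alpha)$, where $\vec q_\alpha[j]=\widehat f(q)_{\alpha\cdot j}$ if $\alpha\cdot j$ is a prefix of some $f(i)$ and otherwise $\vec q_\alpha[j]$ is the tree of topology $t_2/(\alpha\cdot j)$ with all PIFOs empty; and $p_\alpha$ is obtained from $p$ by replacing each entry $(i,r)$ by $(j,r)$ where $\alpha\cdot j$ is a prefix of $f(i)$, deleting entries for which no such $j$ exists, keeping the order. Finally $\widehat f(q)=\widehat f(q)_\epsilon$. *)

(* Defs.v *)
From mathcomp Require Import all_boot all_order.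
Set Implicit Arguments. Unset Strict Implicit. Unset Printing Implicit Defensive.
Import Order.TTheory.
Local Open Scope order_scope.

Inductive Topo : Type := Star | Node of seq Topo.

(* Subtree t/alpha (partial); addresses use 1-based child indices. *)
Fixpoint subtopo (t : Topo) (a : seq nat) : option Topo :=
  match a with
  | [::] => Some t
  | i :: b => match t with
              | Star => None
              | Node ts => if (0 < i)%N && (i <= size ts)%N
                           then subtopo (nth Star ts i.-1) b else None
              end
  end.

Definition is_addr (t : Topo) (a : seq nat) : Prop := subtopo t a <> None.

(* Embedding of t1 in t2 (f is given on all of N*, only its values on Addr(t1) matter). *)
Record embedding (t1 t2 : Topo) (f : seq nat -> seq nat) : Prop := {
  emb_into   : forall a, is_addr t1 a -> is_addr t2 (f a);
  emb_inj    : forall a b, is_addr t1 a -> is_addr t1 b -> f a = f b -> a = b;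
  emb_root   : f [::] = [::];
  emb_leaf   : forall a, subtopo t1 a = Some Star -> subtopo t2 (f a) = Some Star;
  emb_prefix : forall a b, is_addr t1 a -> is_addr t1 b ->
                 prefix a b = prefix (f a) (f b)
}.

Section PIFO.
Variable Pkt : Type.
Variables (d : Order.disp_t) (Rk : orderType d).

(* A PIFO over S: a sequence of (element, rank) in insertion order.
   popE returns the entry of minimal rank (earliest among ties) and the rest. *)
Fixpoint popE (S : Type) (p : seq (S * Rk)) : option ((S * Rk) * seq (S * Rk)) :=
  match p with
  | [::] => None
  | x :: p' => match popE p' with
               | Some (y, p'') => if y.2 < x.2 then Some (y, x :: p'') else Some (x, p')
               | None => Some (x, p')
               end
  end.

Definition pop_PIFO (S : Type) (p : seq (S * Rk)) : option (S * seq (S * Rk)) :=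
  match popE p with Some (e, p') => Some (e.1, p') | None => None end.

(* Untyped PIFO trees; PIFOTree(t) = those q with wt t q. *)
Inductive PTree : Type :=
  | Leaf of seq (Pkt * Rk)
  | Internal of seq PTree & seq (nat * Rk).

Fixpoint wt (t : Topo) (q : PTree) : Prop :=
  match t, q with
  | Star, Leaf _ => True
  | Node ts, Internal qs p =>
      all (fun e => (1 <= e.1 <= size ts)%N) p /\
      (fix wts (ts : seq Topo) (qs : seq PTree) : Prop :=
         match ts, qs with
         | [::], [::] => True
         | t0 :: ts', q0 :: qs' => wt t0 q0 /\ wts ts' qs'
         | _, _ => False
         end) ts qs
  | _, _ => False
  end.

Definition PIFOTree (t : Topo) := {q : PTree | wt t q}.

Fixpoint pop (q : PTree) : option (Pkt * PTree) :=
  match q with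
  | Leaf p => match pop_PIFO p with
              | Some (pkt, p') => Some (pkt, Leaf p')
              | None => None
              end
  | Internal qs p =>
      match pop_PIFO p with
      | Some (i, p') =>
          let fix go (qs : seq PTree) (k : nat) : option (Pkt * seq PTree) :=
            match qs with
            | [::] => None
            | q0 :: qs' =>
                match k with
                | 0 => match pop q0 with
                       | Some (pk, q0') => Some (pk, q0' :: qs')
                       | None => None
                       end
                | k'.+1 => match go qs' k' with
                           | Some (pk, r) => Some (pk, q0 :: r)
                           | None => None
                           end
                end
            end in
          match i with
          | 0 => None
          | i'.+1 => match go qs i' with
                     | Some (pk, qs'') => Some (pk, Internal qs'' p')
                     | None => None
                     end
          end
      | None => None
      end
  end.

Fixpoint empty_tree (t : Topo) : PTree :=
  match t with
  | Star => Leaf [::]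
  | Node ts => Internal (map empty_tree ts) [::]
  end.

Definition relabel (F : seq nat -> seq nat) (a : seq nat) (p : seq (nat * Rk))
  : seq (nat * Rk) :=
  pmap (fun e => let fi := F [:: e.1] in
                 if prefix a fi && (size a < size fi)%N
                 then Some (nth 0%N fi (size a), e.2) else None) p.

Definition below (n : nat) (F : seq nat -> seq nat) (b : seq nat) : bool :=
  has (fun i => prefix b (F [:: i])) (iota 1 n).

(* hat f(q)_alpha, given the already-lifted children lqs (lqs[i-1] = hat f_i (q[i])),
   t = t2/alpha. *)
Fixpoint build (n : nat) (F : seq nat -> seq nat) (lqs : seq PTree)
         (p : seq (nat * Rk)) (t : Topo) (a : seq nat) : PTree :=
  let k := find (fun i => F [:: i] == a) (iota 1 n) in
  if (k < n)%N then nth (Leaf [::]) lqs k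
  else match t with
       | Star => Leaf [::]
       | Node ts =>
           Internal
             ((fix go (ts : seq Topo) (j : nat) : seq PTree :=
                 match ts with
                 | [::] => [::]
                 | tj :: r =>
                     (if below n F (rcons a j)
                      then build n F lqs p tj (rcons a j)
                      else empty_tree tj) :: go r j.+1
                 end) ts 1%N)
             (relabel F a p)
       end.

(* The lifting hat f : PIFOTree(t1) -> PIFOTree(t2); f_i(alpha) is defined by
   f(i.alpha) = f(i).f_i(alpha). *)
Fixpoint lift_tree (t2 : Topo) (F : seq nat -> seq nat) (q : PTree) : PTree :=
  match q with
  | Leaf p => Leaf p
  | Internal qs p =>
      let fix liftall (qs : seq PTree) (i : nat) : seq PTree :=
        match qs with
        | [::] => [::]
        | qi :: r =>
            lift_tree (odflt Star (subtopo t2 (F [:: i])))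
                 (fun a => drop (size (F [:: i])) (F (i :: a))) qi
            :: liftall r i.+1
        end in
      build (size qs) F (liftall qs 1%N) p t2 [::]
  end.

End PIFO.

(* Main.v *)
Require Import Defs.
From mathcomp Require Import all_boot all_order zify.
Set Implicit Arguments. Unset Strict Implicit. Unset Printing Implicit Defensive.
Import Order.TTheory.
Module P1.
Local Open Scope order_scope.

Section S.
Variable Pkt : Type.
Variables (d : Order.disp_t) (Rk : orderType d).
Notation PT := (PTree Pkt Rk).

Fixpoint popgo (qs : seq PT) (k : nat) : option (Pkt * seq PT) :=
  match qs with
  | [::] => None
  | q0 :: qs' =>
      match k with
      | 0 => match pop q0 with
             | Some (pk, q0') => Some (pk, q0' :: qs')
             | None => None
             end
      | k'.+1 => match popgo qs' k' with
                 | Some (pk, r) => Some (pk, q0 :: r)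
                 | None => None
                 end
      end
  end.

Lemma popE_int qs p : pop (Internal qs p) =
  match pop_PIFO p with
  | Some (i, p') =>
      match i with
      | 0 => None
      | i'.+1 => match popgo qs i' with
                 | Some (pk, qs'') => Some (pk, Internal qs'' p')
                 | None => None
                 end
      end
  | None => None
  end.
Proof. by []. Qed.

Fixpoint buildgo n F lqs (p : seq (nat * Rk)) (a : seq nat) (ts : seq Topo) (j : nat) : seq PT :=
  match ts with
  | [::] => [::]
  | tj :: r =>
      (if below n F (rcons a j)
       then build n F lqs p tj (rcons a j)
       else empty_tree Pkt Rk tj) :: buildgo n F lqs p a r j.+1
  end.

Lemma buildE n F lqs p t a : build n F lqs p t a =
  let k := find (fun i => F [:: i] == a) (iota 1 n) in
  if (k < n)%N then nth (Leaf [::]) lqs k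
  else match t with
       | Star => Leaf [::]
       | Node ts => Internal (buildgo n F lqs p a ts 1) (relabel F a p)
       end.
Proof.
case: t => [//|ts] /=; case: ifP => // _; congr Internal.
by elim: ts 1%N => //= t ts IH j; rewrite IH.
Qed.

Fixpoint liftall t2 (F : seq nat -> seq nat) (qs : seq PT) (i : nat) : seq PT :=
  match qs with
  | [::] => [::]
  | qi :: r =>
      lift_tree (odflt Star (subtopo t2 (F [:: i])))
           (fun a => drop (size (F [:: i])) (F (i :: a))) qi
      :: liftall t2 F r i.+1
  end.

Lemma liftE t2 F qs p : lift_tree t2 F (Internal qs p) =
  build (size qs) F (liftall t2 F qs 1) p t2 [::].
Proof.
rewrite /=; congr build.
by elim: qs 1%N => //= q qs IH j; rewrite IH.
Qed.

Fixpoint wts (ts : seq Topo) (qs : seq PT) : Prop :=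
  match ts, qs with
  | [::], [::] => True
  | t0 :: ts', q0 :: qs' => wt t0 q0 /\ wts ts' qs'
  | _, _ => False
  end.

Lemma wtE ts qs p : wt (Node ts) (Internal qs p) <->
  all (fun e => (1 <= e.1 <= size ts)%N) p /\ wts ts qs.
Proof.
rewrite /=; suff -> : forall ts0 qs0, (fix wts (ts : seq Topo) (qs : seq PT) : Prop :=
         match ts, qs with
         | [::], [::] => True
         | t0 :: ts', q0 :: qs' => wt t0 q0 /\ wts ts' qs'
         | _, _ => False
         end) ts0 qs0 = wts ts0 qs0 by [].
by elim=> [|t0 ts0 IH] [|q0 qs0] //=; rewrite IH.
Qed.

Lemma popE_some (S : Type) (p : seq (S * Rk)) x p' : popE p = Some (x, p') ->
  exists p1 p2, [/\ p = p1 ++ x :: p2, p' = p1 ++ p2,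
     all (fun y => x.2 < y.2) p1 & all (fun z => ~~ (z.2 < x.2)) p2].
Proof.
elim: p x p' => [//|x0 p IH] x p' /=.
case E: (popE p) => [[y p'']|]; last first.
  case=> <- <-; exists [::], p; split=> //.
  by clear IH; case: p E => //= a l; case: (popE l) => [[? ?]|] //; case: ifP.
have [p1 [p2 [Ep Ep'' A1 A2]]] := IH _ _ E.
case: ifP => Hy [<- <-].
  by exists (x0 :: p1), p2; rewrite /= Ep Ep'' Hy A1 A2.
exists [::], p; split=> //=; rewrite Ep all_cat /=.
have Hle : x0.2 <= y.2 by rewrite leNgt Hy.
rewrite Hy /=; apply/andP; split.
  apply: sub_all A1 => z Hz.
  by rewrite -leNgt (le_trans Hle) // ltW.
apply: sub_all A2 => z Hz.
by rewrite -leNgt (le_trans Hle) // leNgt.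
Qed.

Lemma popE_cat (S : Type) (p1 p2 : seq (S * Rk)) x :
  all (fun y => x.2 < y.2) p1 -> all (fun z => ~~ (z.2 < x.2)) p2 ->
  popE (p1 ++ x :: p2) = Some (x, p1 ++ p2).
Proof.
elim: p1 => [|y p1 IH] /=.
  move=> _ A2; case E: (popE p2) => [[z p'']|] //.
  have [q1 [q2 [Ep _ _ _]]] := popE_some E.
  by move: A2; rewrite Ep all_cat /= => /and3P[_ /negbTE -> _].
move=> /andP[Hy A1] A2; rewrite IH // Hy //.
Qed.

Section PM.
Variables (S S' : Type) (g : S * Rk -> option (S' * Rk)).
Hypothesis Hg : forall e e', g e = Some e' -> e'.2 = e.2.

Lemma all_pmap (P : Rk -> bool) s :
  all (fun y => P y.2) s -> all (fun y => P y.2) (pmap g s).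
Proof.
elim: s => //= y s IH /andP[Py As].
case E: (g y) => [e'|] /=; last exact: IH.
by rewrite (Hg E) Py IH.
Qed.

Lemma pmap_popE p x p' e' : popE p = Some (x, p') -> g x = Some e' ->
  popE (pmap g p) = Some (e', pmap g p').
Proof.
move=> /popE_some [p1 [p2 [-> -> A1 A2]]] Ex.
rewrite !pmap_cat /= Ex /=; apply: popE_cat; rewrite (Hg Ex).
  exact: (all_pmap (P := fun r => x.2 < r)).
exact: (all_pmap (P := fun r => ~~ (r < x.2))).
Qed.

Lemma pmap_popE_none p x p' : popE p = Some (x, p') -> g x = None ->
  pmap g p = pmap g p'.
Proof.
by move=> /popE_some [p1 [p2 [-> -> A1 A2]]] Ex; rewrite !pmap_cat /= Ex.
Qed.
End PM.

Lemma popgo_nth qs k pk q0' : (k < size qs)%N ->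
  pop (nth (Leaf [::]) qs k) = Some (pk, q0') ->
  popgo qs k = Some (pk, set_nth (Leaf [::]) qs k q0').
Proof.
elim: qs k => [//|q qs IH] [|k] /=.
  by move=> _ ->.
by move=> Hk Hp; rewrite (IH k Hk Hp).
Qed.

Lemma size_buildgo n F lqs p a ts j : size (buildgo n F lqs p a ts j) = size ts.
Proof. by elim: ts j => //= t ts IH j; rewrite IH. Qed.

Lemma nth_buildgo n F lqs p a ts j m : (m < size ts)%N ->
  nth (Leaf [::]) (buildgo n F lqs p a ts j) m =
  if below n F (rcons a (j + m)) then build n F lqs p (nth Star ts m) (rcons a (j + m))
  else empty_tree Pkt Rk (nth Star ts m).
Proof.
elim: ts j m => [//|t ts IH] j [|m] /=; first by rewrite addn0.
by move=> Hm; rewrite IH // addSnnS.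
Qed.

Lemma size_liftall t2 F qs i : size (liftall t2 F qs i) = size qs.
Proof. by elim: qs i => //= q qs IH i; rewrite IH. Qed.

Lemma nth_liftall t2 F qs i m : (m < size qs)%N ->
  nth (Leaf [::]) (liftall t2 F qs i) m =
  lift_tree (odflt Star (subtopo t2 (F [:: i + m])))
           (fun a => drop (size (F [:: i + m])) (F ((i + m) :: a))) (nth (Leaf [::]) qs m).
Proof.
elim: qs i m => [//|q qs IH] i [|m] /=; first by rewrite addn0.
by move=> Hm; rewrite IH // addSnnS.
Qed.

Lemma wts_nth ts qs : wts ts qs -> size qs = size ts /\
  forall m, (m < size ts)%N -> wt (nth Star ts m) (nth (Leaf [::]) qs m).
Proof.
elim: ts qs => [|t ts IH] [|q qs] //= [Hq /IH [-> H]]; split=> // -[|m] //= Hm.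
exact: H.
Qed.
End S.

End P1.
Import P1.

Lemma subtopo_cat t a b : subtopo t (a ++ b) = obind (fun t' => subtopo t' b) (subtopo t a).
Proof.
elim: a t => [//|i a IH] [|ts] //=.
by case: ifP.
Qed.

Lemma addr_child ts i a : (0 < i <= size ts)%N ->
  is_addr (Node ts) (i :: a) <-> is_addr (nth Star ts i.-1) a.
Proof. by rewrite /is_addr /= => ->. Qed.

Section Emb.
Variables (ts : seq Topo) (t2 : Topo) (f : seq nat -> seq nat).
Hypothesis Hf : embedding (Node ts) t2 f.
Variable i : nat.
Hypothesis Hi : (0 < i <= size ts)%N.
Let c := nth Star ts i.-1.
Let g := fun a => drop (size (f [:: i])) (f (i :: a)).

Lemma addr_i : is_addr (Node ts) [:: i].
Proof. by apply/(addr_child _ Hi). Qed.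

Lemma f_cons a : is_addr c a -> f (i :: a) = f [:: i] ++ g a.
Proof.
move=> Ha; have Hia : is_addr (Node ts) (i :: a) by apply/(addr_child _ Hi).
have := emb_prefix Hf addr_i Hia; rewrite /= eqxx prefix0s => /esym/prefixP [s Es].
by rewrite /g Es drop_size_cat.
Qed.

Lemma sub_fi : exists T2', subtopo t2 (f [:: i]) = Some T2'.
Proof.
have := emb_into Hf addr_i; rewrite /is_addr.
by case: (subtopo t2 (f [:: i])) => [T|//] _; exists T.
Qed.

Lemma emb_child : embedding c (odflt Star (subtopo t2 (f [:: i]))) g.
Proof.
have [T2' ET] := sub_fi; rewrite ET /=.
have key : forall a, is_addr c a -> subtopo T2' (g a) = subtopo t2 (f (i :: a)).
  by move=> a Ha; rewrite f_cons // subtopo_cat ET.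
split.
- move=> a Ha; rewrite /is_addr key //; apply: (emb_into Hf); exact/(addr_child _ Hi).
- move=> a b Ha Hb Eg.
  have : f (i :: a) = f (i :: b) by rewrite (f_cons Ha) (f_cons Hb) Eg.
  move/(emb_inj Hf) => H.
  by case: (H ((addr_child _ Hi).2 Ha) ((addr_child _ Hi).2 Hb)).
- by rewrite /g drop_size.
- move=> a Ha; rewrite key; last by rewrite /is_addr Ha.
  by have := emb_leaf Hf (a := i :: a); rewrite /= Hi; apply.
- move=> a b Ha Hb.
  have := emb_prefix Hf ((addr_child _ Hi).2 Ha) ((addr_child _ Hi).2 Hb).
  rewrite (f_cons Ha) (f_cons Hb) /= eqxx /= => ->.
  by rewrite prefix_catr // eqxx.
Qed.
End Emb.

Fixpoint AllT (P : Topo -> Prop) (ts : seq Topo) : Prop :=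
  match ts with [::] => True | t :: r => P t /\ AllT P r end.

Definition Topo_ind2 (P : Topo -> Prop) (HS : P Star)
  (HN : forall ts, AllT P ts -> P (Node ts)) : forall t, P t :=
  fix Fx t := match t with
  | Star => HS
  | Node ts => HN ts ((fix G ts := match ts return AllT P ts with
                        | [::] => I | t :: r => conj (Fx t) (G r) end) ts)
  end.

Lemma AllT_nth P ts m : AllT P ts -> (m < size ts)%N -> P (nth Star ts m).
Proof. by elim: ts m => [//|t ts IH] [|m] /= [Ht Hr] // Hm; apply: IH. Qed.

Section Path.
Variable Pkt : Type.
Variables (d : Order.disp_t) (Rk : orderType d).
Notation PT := (PTree Pkt Rk).
Variables (n : nat) (F : seq nat -> seq nat) (t2 : Topo).
Variables (lqs : seq PT) (p p' : seq (nat * Rk)) (i : nat) (r : Rk).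
Variables (L L' : PT) (pkt : Pkt).
Hypothesis Hpop : popE p = Some ((i, r), p').
Hypothesis Hi : (0 < i <= n)%N.
Hypothesis Haddr : is_addr t2 (F [:: i]).
Hypothesis Hpre : forall k k', (0 < k <= n)%N -> (0 < k' <= n)%N ->
  prefix (F [:: k]) (F [:: k']) -> k = k'.
Hypothesis Hsz : size lqs = n.
Hypothesis HL : nth (Leaf [::]) lqs i.-1 = L.
Hypothesis HpL : pop L = Some (pkt, L').
Let lqs' := set_nth (Leaf [::]) lqs i.-1 L'.

Let g (a : seq nat) := (fun e : nat * Rk => let fi := F [:: e.1] in
                 if prefix a fi && (size a < size fi)%N
                 then Some (nth 0%N fi (size a), e.2) else None).

Lemma Hg a e e' : g a e = Some e' -> e'.2 = e.2.
Proof. by rewrite /g; case: ifP => // _ [<-]. Qed.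

Lemma find_lt a : (find (fun k => F [:: k] == a) (iota 1 n) < n)%N ->
  let k := find (fun k => F [:: k] == a) (iota 1 n) in
  F [:: k.+1] = a /\ (0 < k.+1 <= n)%N.
Proof.
move=> Hk k; have Hh : has (fun k => F [:: k] == a) (iota 1 n) by rewrite has_find size_iota.
have := nth_find 0%N Hh; rewrite nth_iota // add1n => /eqP ->; split=> //.
Qed.

Lemma find_i : find (fun k => F [:: k] == F [:: i]) (iota 1 n) = i.-1.
Proof.
have Hh : has (fun k => F [:: k] == F [:: i]) (iota 1 n).
  apply/hasP; exists i; rewrite ?mem_iota //.
have Hk : (find (fun k => F [:: k] == F [:: i]) (iota 1 n) < n)%N by move: Hh; rewrite has_find size_iota.
have [E R] := find_lt Hk.
have := Hpre R Hi; rewrite E prefix_refl => /(_ isT) Ei; by rewrite -[in RHS]Ei.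
Qed.

Lemma frame : forall t b, ~~ prefix b (F [:: i]) ->
  build n F lqs p t b = build n F lqs' p' t b.
Proof.
elim/Topo_ind2 => [|ts IH] b Hb; rewrite !buildE /=; case: ifP => Hk //.
- have [E R] := find_lt Hk.
  rewrite /lqs' nth_set_nth /=; case: eqP => // Ek.
  by move: Hb; rewrite -E Ek prednK ?prefix_refl //; case/andP: Hi.
- have [E R] := find_lt Hk.
  rewrite /lqs' nth_set_nth /=; case: eqP => // Ek.
  by move: Hb; rewrite -E Ek prednK ?prefix_refl //; case/andP: Hi.
congr Internal.
  apply: (eq_from_nth (x0 := Leaf [::])); rewrite !size_buildgo // => m Hm.
  rewrite !nth_buildgo //; case: ifP => // _.
  apply: (AllT_nth IH Hm).
  by apply: contra Hb; rewrite -cats1; apply: catl_prefix.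
rewrite /relabel; apply: (pmap_popE_none (g := g b) Hpop).
by rewrite /g /= (negbTE Hb).
Qed.


Lemma path_lemma : forall gm a t, a ++ gm = F [:: i] -> subtopo t2 a = Some t ->
  pop (build n F lqs p t a) = Some (pkt, build n F lqs' p' t a).
Proof.
have Hi0 : (0 < i)%N by case/andP: Hi.
have Hin : (i.-1 < n)%N by case/andP: Hi => H1 H2; lia.
elim=> [|j gm IH] a t.
  rewrite cats0 => Ea _; rewrite !buildE /= Ea find_i Hin HL.
  by rewrite /lqs' nth_set_nth /= eqxx.
move=> Ea Et.
have Hk : (find (fun k => F [:: k] == a) (iota 1 n) < n)%N = false.
  apply/negbTE/negP => Hk; have [E R] := find_lt Hk.
  have := Hpre R Hi; rewrite E -Ea prefix_prefix => /(_ isT) Ek.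
  by move: Ea; rewrite -E Ek => /(congr1 size); rewrite size_cat /=; lia.
have := Haddr; rewrite /is_addr -Ea subtopo_cat Et /=.
case: t Et => [//|ts] Et; case: ifP => // Hj _.
rewrite !buildE /= Hk popE_int /pop_PIFO /relabel.
rewrite (pmap_popE (g := g a) (@Hg a) Hpop (e' := (j, r))); last first.
  by rewrite /g /= -Ea prefix_prefix size_cat /= nth_cat ltnn subnn /=; case: ltngtP => //; lia.
case: j Ea Hj => [|j'] Ea Hj; first by case/andP: Hj.
set X := build n F lqs p (nth Star ts j') (rcons a j'.+1).
have Hlt : (j' < size (buildgo n F lqs p a ts 1))%N by rewrite size_buildgo; case/andP: Hj.
have Hbel : below n F (rcons a j'.+1).
  apply/hasP; exists i; first by rewrite mem_iota; lia.
  by rewrite -Ea -cat_rcons prefix_prefix.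
have HX : nth (Leaf [::]) (buildgo n F lqs p a ts 1) j' = X.
  by rewrite nth_buildgo ?add1n ?Hbel //; case/andP: Hj.
have Ea' : rcons a j'.+1 ++ gm = F [:: i] by rewrite cat_rcons.
have Et' : subtopo t2 (rcons a j'.+1) = Some (nth Star ts j').
  have {}Hj : (j' < size ts)%N by case/andP: Hj.
  by rewrite -cats1 subtopo_cat Et /= Hj.
have HP := IH _ _ Ea' Et'; rewrite -/X -HX in HP.
rewrite /= (popgo_nth Hlt HP); congr (Some (_, Internal _ _)).
apply: (eq_from_nth (x0 := Leaf [::])).
  by rewrite size_set_nth !size_buildgo; apply/maxn_idPr; case/andP: Hj.
rewrite size_set_nth size_buildgo => m Hm.
have Hm' : (m < size ts)%N by move: Hm; case/andP: Hj => _ H; lia.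
rewrite nth_set_nth /= !nth_buildgo // add1n.
case: eqP => [->|Hne]; first by rewrite Hbel.
case: ifP => // _; apply: frame.
rewrite -Ea -!cats1 prefix_catr // eqxx /=.
by apply/negP => /andP[/eqP [E] _]; apply: Hne.
Qed.

End Path.

Section Main.
Variable Pkt : Type.
Variables (d : Order.disp_t) (Rk : orderType d).
Notation PT := (PTree Pkt Rk).

Fixpoint AllQ (P : PT -> Prop) (qs : seq PT) : Prop :=
  match qs with [::] => True | q :: r => P q /\ AllQ P r end.

Definition PTree_ind2 (P : PT -> Prop) (HLf : forall p, P (Leaf p))
  (HN : forall qs p, AllQ P qs -> P (Internal qs p)) : forall q, P q :=
  fix Fx q := match q with
  | Leaf p => HLf p
  | Internal qs p => HN qs p ((fix G qs := match qs return AllQ P qs with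
                        | [::] => I | q :: r => conj (Fx q) (G r) end) qs)
  end.

Lemma AllQ_nth P qs m : AllQ P qs -> (m < size qs)%N -> P (nth (Leaf [::]) qs m).
Proof. by elim: qs m => [//|q qs IH] [|m] /= [Ht Hr] // Hm; apply: IH. Qed.

Lemma popgo_inv (qs : seq PT) k pk qs'' : popgo qs k = Some (pk, qs'') ->
  (k < size qs)%N /\ exists q0', pop (nth (Leaf [::]) qs k) = Some (pk, q0') /\
     qs'' = set_nth (Leaf [::]) qs k q0'.
Proof.
elim: qs k pk qs'' => [//|q qs IH] [|k] pk qs'' /=.
  by case: (pop q) => [[pk' q0']|] // [<- <-]; split=> //; exists q0'.
case E: (popgo qs k) => [[pk' r']|] // [<- <-].
by have [Hk [q0' [H1 ->]]] := IH _ _ _ E; split=> //; exists q0'.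
Qed.

Theorem main : forall (q : PT) (t1 t2 : Topo) (f : seq nat -> seq nat),
  embedding t1 t2 f -> wt t1 q ->
  forall (pkt : Pkt) (q' : PT),
    pop q = Some (pkt, q') ->
    pop (lift_tree t2 f q) = Some (pkt, lift_tree t2 f q').
Proof.
elim/PTree_ind2 => [p|qs p IH] t1 t2 f Hf Hwt pkt q'.
  by rewrite /=; case: (pop_PIFO p) => [[pk p']|] // [<- <-].
case: t1 Hf Hwt => [//|ts] Hf /wtE [Hall Hwts].
have [Hsz Hch] := wts_nth Hwts.
rewrite liftE popE_int /pop_PIFO.
case Ep: (popE p) => [[[i r] p']|] //=.
case: i Ep => [//|i'] Ep.
case Eg: (popgo qs i') => [[pk qs'']|] // [<- <-].
have [Hi' [q0' [Hp0 Eqs]]] := popgo_inv Eg.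
have Hi : (0 < i'.+1 <= size ts)%N by rewrite -Hsz.
set i := i'.+1.
have Hemb := emb_child Hf Hi.
have HIH := AllQ_nth IH Hi' _ _ _ Hemb (Hch _ (leq_trans Hi' (eq_leq Hsz))) _ _ Hp0.
rewrite ?liftE.
have Hsz'' : size qs'' = size qs by rewrite Eqs size_set_nth; apply/maxn_idPr.
rewrite Hsz''.
have Hlq : liftall t2 f qs'' 1 = set_nth (Leaf [::]) (liftall t2 f qs 1) i'
   (lift_tree (odflt Star (subtopo t2 (f [:: i])))
       (fun a => drop (size (f [:: i])) (f (i :: a))) q0').
  apply: (eq_from_nth (x0 := Leaf [::])).
    by rewrite size_set_nth !size_liftall Hsz''; symmetry; apply/maxn_idPr.
  rewrite size_liftall Hsz'' => m Hm.
  rewrite nth_set_nth /= !nth_liftall ?Hsz'' // Eqs nth_set_nth /=.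
  by case: eqP => [->|//]; rewrite add1n.
rewrite Hlq.
have Hi2 : (0 < i <= size qs)%N by rewrite Hsz.
have Haddr : is_addr t2 (f [:: i]) by apply: (emb_into Hf); apply: addr_i.
have Hpre : forall k k', (0 < k <= size qs)%N -> (0 < k' <= size qs)%N ->
    prefix (f [:: k]) (f [:: k']) -> k = k'.
  move=> k k' Hk Hk'; rewrite Hsz in Hk Hk'.
  by rewrite -(emb_prefix Hf (addr_i Hk) (addr_i Hk')) /= andbT => /eqP.
have HL : nth (Leaf [::]) (liftall t2 f qs 1) i.-1 = nth (Leaf [::]) (liftall t2 f qs 1) i' by [].
have HpL : pop (nth (Leaf [::]) (liftall t2 f qs 1) i') = Some (pk, lift_tree (odflt Star (subtopo t2 (f [:: i])))
       (fun a => drop (size (f [:: i])) (f (i :: a))) q0').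
  by rewrite nth_liftall // add1n.
exact: (path_lemma Ep Hi2 Haddr Hpre (size_liftall _ _ _ _) HL HpL (cat0s _) (erefl _)).
Qed.
End Main.

Theorem lemma5p7 (Pkt : Type) (d : Order.disp_t) (Rk : orderType d)
  (t1 t2 : Topo) (f : seq nat -> seq nat) :
  embedding t1 t2 f ->
  forall (q : PTree Pkt Rk), wt t1 q ->
  forall (pkt : Pkt) (q' : PTree Pkt Rk),
    pop q = Some (pkt, q') ->
    pop (lift_tree t2 f q) = Some (pkt, lift_tree t2 f q').
Proof. by move=> Hf q Hq; apply: main Hf Hq. Qed.
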